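(* Let $x_1,\dots,x_N\in\mathbb{R}^n$ be used directly as tokens, and consider a linear-attention layer with linear per-token maps $q_j=W_Q^\top x_j$, $k_i=W_K^\top x_i$, $v_i=W_V^\top x_i$ and outputs $o_j=\sum_{i=1}^N\langle q_j,k_i\rangle v_i$. Then, with $M=W_QW_K^\top$, $$o_j=\Big[\sum_{i=1}^N (W_V^\top x_i)x_i^\top\Big]M^\top x_j,$$ so $o_j$ is linear in $x_j$ times a quadratic function of $\{x_i\}$ and is odd under the global sign flip $x_i\mapsto -x_i$ (for all $i$ simultaneously): $o_j\mapsto -o_j$. Consequently, neither such a layer nor any finite stack of such layers (each layer's outputs serving as the next layer's tokens) can produce an output equal to a nonzero statistic that is invariant under the global flip, such as $\sum_{i=1}^N x_ix_i^\top$.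
   Context: Linear attention here means attention without softmax: the output at token $j$ is the sum over all tokens $i$ of the inner product of the query of $j$ with the key of $i$, times the value of $i$. ''Pure data tokens'' means there are no constant channels or extra tokens beyond the $x_i$. *)

(* Defs.v *)
From HB Require Import structures.
From mathcomp Require Import all_boot all_order all_algebra.
Set Implicit Arguments. Unset Strict Implicit. Unset Printing Implicit Defensive.
Import Order.TTheory GRing.Theory Num.Theory.
Local Open Scope ring_scope.

Definition dotc (R : ringType) (d : nat) (u v : 'cV[R]_d) : R :=
  \sum_(k < d) u k 0 * v k 0.

Definition attn (R : ringType) (n d m N : nat)
  (WQ WK : 'M[R]_(n, d)) (WV : 'M[R]_(n, m)) (X : 'I_N -> 'cV[R]_n)
  (j : 'I_N) : 'cV[R]_m :=
  \sum_(i < N) dotc (WQ^T *m X j) (WK^T *m X i) *: (WV^T *m X i).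

Inductive stack (R : ringType) : nat -> nat -> Type :=
| SNil n : stack R n n
| SCons n d m p : 'M[R]_(n, d) -> 'M[R]_(n, d) -> 'M[R]_(n, m) ->
    stack R m p -> stack R n p.

Fixpoint run (R : ringType) (N : nat) n p (s : stack R n p) :
  ('I_N -> 'cV[R]_n) -> 'I_N -> 'cV[R]_p :=
  match s in stack _ n p return ('I_N -> 'cV[R]_n) -> 'I_N -> 'cV[R]_p with
  | SNil _ => fun X => X
  | SCons _ _ _ _ WQ WK WV s' => fun X => run s' (attn WQ WK WV X)
  end.

Definition flip (R : ringType) (N n : nat) (X : 'I_N -> 'cV[R]_n) :
  'I_N -> 'cV[R]_n := fun i => - X i.

Definition gram (R : ringType) (N n : nat) (X : 'I_N -> 'cV[R]_n) : 'M[R]_n :=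
  \sum_(i < N) X i *m (X i)^T.

(* Main.v *)
Require Import Defs.
From HB Require Import structures.
From mathcomp Require Import all_boot all_order all_algebra.
From mathcomp Require Import lra.
Import Order.TTheory GRing.Theory Num.Theory.
Local Open Scope ring_scope.

Lemma attn_neg (R : realFieldType) (n d m N : nat) (WQ WK : 'M[R]_(n, d)) (WV : 'M[R]_(n, m))
  (X Y : 'I_N -> 'cV[R]_n) : (forall i, Y i = - X i) ->
  forall j, attn WQ WK WV Y j = - attn WQ WK WV X j.
Proof.
move=> HY j; rewrite /attn -sumrN; apply: eq_bigr => i _.
rewrite !HY !mulmxN scalerN; congr (- (_ *: _)).
rewrite /dotc; apply: eq_bigr => k _; by rewrite !mxE mulrNN.
Qed.

Lemma run_neg (R : realFieldType) (N n p : nat) (s : stack R n p) :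
  forall (X Y : 'I_N -> 'cV[R]_n), (forall i, Y i = - X i) ->
  forall j, run s Y j = - run s X j.
Proof.
elim: s => [k|k d m q WQ WK WV s IH] X Y HY j /=; first exact: HY.
apply: IH; exact: attn_neg.
Qed.

Lemma mx_self_neg (R : realFieldType) a b (x : 'M[R]_(a, b)) : x = - x -> x = 0.
Proof.
move=> H; apply/matrixP => u v; have := congr1 (fun M : 'M[R]_(a, b) => M u v) H.
rewrite !mxE => e; lra.
Qed.

Theorem proposition6 (R : realFieldType) :
  (* closed form with M = W_Q W_K^T *)
  (forall (n d m N : nat) (WQ WK : 'M[R]_(n, d)) (WV : 'M[R]_(n, m))
     (X : 'I_N -> 'cV[R]_n) (j : 'I_N),
     attn WQ WK WV X j =
     (\sum_(i < N) (WV^T *m X i) *m (X i)^T) *m (WQ *m WK^T)^T *m X j)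
  /\
  (* oddness under the global sign flip *)
  (forall (n d m N : nat) (WQ WK : 'M[R]_(n, d)) (WV : 'M[R]_(n, m))
     (X : 'I_N -> 'cV[R]_n) (j : 'I_N),
     attn WQ WK WV (flip X) j = - attn WQ WK WV X j)
  /\
  (* no finite stack equals a flip-invariant statistic unless it is zero *)
  (forall (N n p : nat) (s : stack R n p)
     (T : ('I_N -> 'cV[R]_n) -> 'I_N -> 'cV[R]_p),
     (forall X, T (flip X) = T X) ->
     (forall X, run s X = T X) ->
     forall X j, T X j = 0)
  /\
  (* in particular, no output token of any stack equals (vec of) sum_i x_i x_i^T *)
  (forall (N n : nat) (s : stack R n (n * n)) (j : 'I_N),
     (0 < n)%N -> (0 < N)%N ->
     ~ (forall X, run s X j = (mxvec (gram X))^T)).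
Proof.
split.
  move=> n d m N WQ WK WV X j; rewrite /attn !mulmx_suml; apply: eq_bigr => i _.
  have -> : WV^T *m X i *m (X i)^T *m (WQ *m WK^T)^T *m X j =
    (WV^T *m X i) *m ((WK^T *m X i)^T *m (WQ^T *m X j)).
    by rewrite trmx_mul !trmx_mul !trmxK !mulmxA.
  rewrite [_^T *m _]mx11_scalar mul_mx_scalar; congr (_ *: _).
  rewrite /dotc !mxE; apply: eq_bigr => k _; by rewrite !mxE mulrC.
split.
  move=> n d m N WQ WK WV X j; exact: attn_neg.
split.
  move=> N n p s T HT Hs X j; apply: mx_self_neg.
  have Hf : forall i, flip X i = - X i by [].
  by rewrite -{1}HT -Hs (@run_neg R N n p s X (flip X) Hf) Hs.
move=> N n s j hn hN H.
pose X := fun i : 'I_N => (const_mx 1 : 'cV[R]_n).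
have Hf : forall i, flip X i = - X i by [].
have := @run_neg R N n (n * n) s X (flip X) Hf j; rewrite !H.
have -> : gram (flip X) = gram X.
  by rewrite /gram; apply: eq_bigr => i _; rewrite /flip linearN /= mulmxN mulNmx opprK.
move/mx_self_neg => /matrixP /(_ (mxvec_index (Ordinal hn) (Ordinal hn)) 0).
rewrite ?mxE mxvecE /gram summxE.
rewrite (eq_bigr (fun _ => 1)); last by move=> k _; rewrite !mxE big_ord1 !mxE mulr1.
rewrite sumr_const card_ord => /eqP; rewrite pnatr_eq0; move/eqP => HN.
by move: hN; rewrite HN.
Qed.
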